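(* Let $(a_N)$ be a sequence of positive numbers and, for each $N$, let $P_{N,a_N}$ be the probability on sequences $(n_j)_{j\ge0}$ of nonnegative integers with $\sum_jn_j=N$ given by $P_{N,a_N}((n_j))\propto e^{-a_N\sum_jjn_j}$, with $\langle n_0\rangle_{N,a_N}$ the expectation of $n_0$. Let $\lambda_N=1-m_N/N$ with integers $0\le m_N\le N$. Suppose $\lambda_N\to\lambda>0$ and $\ln N-(1-\frac{\lambda_N}2)Na_N\to\infty$. Then $P_{N,a_N}(n_0/N\ge\lambda_N)\to0$ and $\lim_{N\to\infty}\frac1N\langle n_0\rangle_{N,a_N}\le\lambda$. If $\ln N-Na_N\to\infty$, then $\frac1N\langle n_0\rangle_{N,a_N}\to0$, i.e. there is no Bose–Einstein condensation.
   Context: This is the canonical ensemble of $N$ noninteracting bosons in a one-dimensional harmonic trap, $n_j$ being the occupation of the $j$-th level and $a_N=\beta(\varepsilon_1-\varepsilon_0)$. *)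

(* Defs.v *)
From HB Require Import structures.
From mathcomp Require Import all_boot all_order all_algebra.
From mathcomp Require Import all_classical all_reals all_analysis.
Set Implicit Arguments. Unset Strict Implicit. Unset Printing Implicit Defensive.
Import Order.TTheory GRing.Theory Num.Theory.
Local Open Scope classical_set_scope.
Local Open Scope ring_scope.

(* An occupation sequence (n_j)_{j>=0} of nonnegative integers with finite
   support is encoded canonically as the finite list [n_0; ...; n_K] of its
   values up to the last nonzero entry (the empty list for the zero
   sequence).  n_j = nth 0 s j. *)
Definition canonical_occ (s : seq nat) : bool := (s == [::]) || (last 0%N s != 0%N).

Definition config (N : nat) : set (seq nat) :=
  [set s | canonical_occ s /\ sumn s = N].

Definition occ (s : seq nat) (j : nat) : nat := nth 0%N s j.

Definition energy (s : seq nat) : nat := (\sum_(j < size s) j * occ s j)%N.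

Section Ensemble.
Variable R : realType.

Definition weight (a : R) (s : seq nat) : R := expR (- (a * (energy s)%:R)).

Definition Zpart (N : nat) (a : R) : \bar R :=
  \esum_(s in config N) (weight a s)%:E.

Definition Prob (N : nat) (a : R) (A : set (seq nat)) : R :=
  fine (\esum_(s in config N `&` A) (weight a s)%:E) / fine (Zpart N a).

Definition mean_n0 (N : nat) (a : R) : R :=
  fine (\esum_(s in config N) ((occ s 0)%:R * weight a s)%:E) / fine (Zpart N a).
End Ensemble.

(* Main.v *)
Require Import Defs.
From HB Require Import structures.
From mathcomp Require Import all_boot all_order all_algebra.
From mathcomp Require Import all_classical all_reals all_analysis.
From mathcomp Require Import zify ring lra.
Import Order.TTheory GRing.Theory Num.Theory numFieldNormedType.Exports.
Local Open Scope classical_set_scope.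
Local Open Scope ring_scope.

Lemma energy_cons (x : nat) (s : seq nat) :
  energy (x :: s) = (sumn s + energy s)%N.
Proof.
rewrite /energy /= big_ord_recl /= mul0n add0n.
have -> : sumn s = (\sum_(j < size s) occ s j)%N.
  rewrite sumnE (big_nth 0%N) big_mkord; apply: eq_bigr => i _; by [].
rewrite -big_split /=; apply: eq_bigr => i _.
by rewrite /occ /= /bump /= add1n mulSn.
Qed.

Section Esum.
Context {R : realType} {T : choiceType}.
Local Open Scope ereal_scope.

Lemma esum_subset (A B : set T) (f : T -> \bar R) :
  (forall x, 0 <= f x) -> A `<=` B -> \esum_(i in A) f i <= \esum_(i in B) f i.
Proof.
move=> f0 AB; rewrite (esum_mkcond A) (esum_mkcond B); apply: le_esum => i _.
case: ifPn => iA; last by case: ifP.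
by rewrite ifT // inE; apply: AB; rewrite -inE.
Qed.

Lemma esumZ (S : set T) (c : R) (f : T -> \bar R) : (0 < c)%R ->
  (forall x, 0 <= f x) ->
  \esum_(i in S) (c%:E * f i) = c%:E * \esum_(i in S) f i.
Proof.
move=> c0 f0; rewrite /esum -ereal_sup_pZl //; congr ereal_sup.
apply/seteqP; split => x /=.
- case=> A hA <-; exists (\sum_(i \in A) f i)%R; first by exists A.
  by rewrite ge0_mule_fsumr.
- case=> y [A hA <-] <-; exists A => //.
  by rewrite ge0_mule_fsumr.
Qed.
End Esum.

Definition Eset (N m : nat) : set (seq nat) := [set s | (N - m <= occ s 0)%N].
Definition fmap (N k : nat) (s : seq nat) : seq nat :=
  (N - k)%N :: (occ s 0 - (N - k))%N :: behead s.

Lemma fmap_prop (N k : nat) (s : seq nat) : (0 < k <= N)%N ->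
  (config N `&` Eset N k) s ->
  [/\ (config N `&` Eset N k) (fmap N k s), ~ Eset N k.-1 (fmap N k s)
    & energy (fmap N k s) = (energy s + k)%N].
Proof.
move=> /andP[k0 kN] [[cs ss] es].
case: s cs ss es => [|x t] cs ss es; first by rewrite /= in ss; lia.
rewrite /Eset /occ /= in es *.
have sN : (x + sumn t = N)%N by [].
split.
- split; last by rewrite /=.
  split; last by rewrite /=; lia.
  apply/orP; right => /=.
  move: cs; rewrite /canonical_occ /= => cs.
  case: t sN cs {ss} => [|y t'] sN cs /=; first by rewrite addn0 in sN; lia.
  by [].
- rewrite /=; lia.
- rewrite !energy_cons /=. lia.
Qed.

Lemma fmap_inj (N k : nat) : (0 < N)%N ->
  set_inj (config N `&` Eset N k) (fmap N k).
Proof.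
move=> N0 s1 s2; rewrite !inE => -[[_ h1] e1] [[_ h2] e2].
case: s1 h1 e1 => [|x1 t1] h1 e1; first by rewrite /= in h1; lia.
case: s2 h2 e2 => [|x2 t2] h2 e2; first by rewrite /= in h2; lia.
rewrite /fmap /Eset /occ /= in e1 e2 * => -[h3 ->].
congr (_ :: _); lia.
Qed.

Section Key.
Context {R : realType}.
Local Open Scope ereal_scope.

Definition W (N : nat) (a : R) (k : nat) : \bar R :=
  \esum_(s in config N `&` Eset N k) (weight a s)%:E.

Lemma weight_gt0 (a : R) s : (0 < weight a s)%R.
Proof. by rewrite /weight expR_gt0. Qed.

Lemma key (N k : nat) (a : R) : (0 < k <= N)%N ->
  W N a k.-1 + (expR (- (a * k%:R)))%:E * W N a k <= W N a k.
Proof.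
move=> hk; have N0 : (0 < N)%N by case/andP: hk => ? ?; lia.
rewrite /W [leRHS](esumID (config N `&` Eset N k.-1)); last first.
  by move=> i _; rewrite lee_fin ltW // weight_gt0.
have -> : (config N `&` Eset N k) `&` (config N `&` Eset N k.-1)
          = config N `&` Eset N k.-1.
  apply/seteqP; split => s /=; first by case.
  case=> cs es; split => //; split => //; rewrite /Eset /= in es *; lia.
apply: leeD => //.
rewrite -esumZ; last 2 first.
- by rewrite expR_gt0.
- by move=> x; rewrite lee_fin ltW // weight_gt0.
rewrite (eq_esum (b := fun s => (weight a (fmap N k s))%:E)); last first.
  move=> s hs; have [_ _ he] := fmap_prop _ _ _ hk hs.
  rewrite /weight he -EFinM -expRD natrD; congr (expR _)%:E; lra.
rewrite -(esum_image _ _ (fun s => (weight a s)%:E)); last exact: fmap_inj N0.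
apply: esum_subset; first by move=> x; rewrite lee_fin ltW // weight_gt0.
move=> _ [s hs <-]; have [h1 h2 _] := fmap_prop _ _ _ hk hs.
by split => // -[].
Qed.
End Key.

Section Bounds.
Context {R : realType}.

Lemma fine_le_bound (X : \bar R) (y : R) : (0 <= X)%E -> (X <= y%:E)%E -> fine X <= y.
Proof.
move=> X0 Xy; have Xf : X \is a fin_num.
  by rewrite ge0_fin_numE // (le_lt_trans Xy) // ltey.
by rewrite -lee_fin fineK.
Qed.

Lemma W_ge0 N (a : R) k : (0 <= W N a k)%E.
Proof. by apply: esum_ge0 => x _; rewrite lee_fin ltW // weight_gt0. Qed.

Lemma W_leZ N (a : R) k : (W N a k <= Zpart N a)%E.
Proof.
apply: esum_subset; first by move=> x; rewrite lee_fin ltW // weight_gt0.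
by move=> s [].
Qed.

Lemma Z_ge0 N (a : R) : (0 <= Zpart N a)%E.
Proof. by apply: esum_ge0 => x _; rewrite lee_fin ltW // weight_gt0. Qed.

Lemma Zfin N (a : R) : fine (Zpart N a) != 0 -> Zpart N a \is a fin_num.
Proof. by case: (Zpart N a) => //= ; rewrite eqxx. Qed.

Lemma Wfin N (a : R) k : fine (Zpart N a) != 0 -> W N a k \is a fin_num.
Proof.
move=> /Zfin Zf; rewrite ge0_fin_numE ?W_ge0 //.
by rewrite (le_lt_trans (W_leZ N a k)) // -ge0_fin_numE // Z_ge0.
Qed.

Lemma chain N (a : R) M d : 0 < a -> fine (Zpart N a) != 0 -> (d <= M <= N)%N ->
  fine (W N a (M - d)) <= (1 - expR (- (a * M%:R))) ^+ d * fine (W N a M).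
Proof.
move=> a0 Z0; elim: d => [|d IH] hd; first by rewrite subn0 expr0 mul1r.
have hk : (0 < M - d <= N)%N by lia.
have := key N (M - d) a hk.
rewrite -(fineK (Wfin N a (M - d).-1 Z0)) -[X in (_ + _ * X <= X)%E](fineK (Wfin N a (M - d) Z0)).
rewrite -EFinM -EFinD lee_fin => hkey.
have -> : (M - d.+1 = (M - d).-1)%N by lia.
rewrite exprS -mulrA.
have qle : expR (- (a * M%:R)) <= expR (- (a * (M - d)%:R)).
  rewrite ler_expR lerN2 ler_pM2l // ler_nat; lia.
have W1 : 0 <= fine (W N a (M - d)) by apply: fine_ge0; exact: W_ge0.
have hq : 0 <= 1 - expR (- (a * M%:R)).
  rewrite subr_ge0 -expR0 ler_expR oppr_le0 mulr_ge0 // ltW //.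
apply: (le_trans (y := (1 - expR (- (a * M%:R))) * fine (W N a (M - d)))).
  apply: (le_trans (y := (1 - expR (- (a * (M - d)%:R))) * fine (W N a (M - d)))).
    rewrite mulrBl mul1r lerBrDr; lra.
  by apply: ler_wpM2r => //; lra.
apply: ler_wpM2l => //; apply: IH; lia.
Qed.
End Bounds.

Section Bounds2.
Context {R : realType}.

Lemma one_sub_div (N m : nat) : (0 < N)%N -> (m <= N)%N ->
  1 - m%:R / N%:R = (N - m)%:R / N%:R :> R.
Proof.
move=> N0 mN; rewrite natrB // mulrBl divff // pnatr_eq0; lia.
Qed.

Lemma S_eq (N m : nat) : (0 < N)%N -> (m <= N)%N ->
  config N `&` [set s | 1 - m%:R / N%:R <= ((occ s 0)%:R / N%:R : R)]
  = config N `&` Eset N m.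
Proof.
move=> N0 mN; apply/seteqP; split => s [cs hs]; split => //;
  rewrite /Eset /= one_sub_div // in hs *.
- by move: hs; rewrite ler_pM2r ?invr_gt0 ?ltr0n // ler_nat.
- by rewrite ler_pM2r ?invr_gt0 ?ltr0n // ler_nat.
Qed.

Lemma Zpos N (a : R) : fine (Zpart N a) != 0 -> 0 < fine (Zpart N a).
Proof. by move=> h; rewrite lt0r h fine_ge0 // Z_ge0. Qed.

Lemma Wm_bound N (a : R) m M : 0 < a -> (m <= M <= N)%N -> fine (Zpart N a) != 0 ->
  fine (W N a m) / fine (Zpart N a) <= (1 - expR (- (a * M%:R))) ^+ (M - m).
Proof.
move=> a0 hm Z0; rewrite ler_pdivrMr ?Zpos //.
have := chain N a M (M - m) a0 Z0; rewrite (_ : (M - (M - m) = m)%N); last by lia.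
move=> /(_ ltac:(lia)) /le_trans; apply; apply: ler_wpM2l.
  rewrite exprn_ge0 // subr_ge0 -expR0 ler_expR oppr_le0 mulr_ge0 // ltW //.
apply: fine_le; [exact: Wfin|exact: Zfin|exact: W_leZ].
Qed.

Lemma prob_bound N (a : R) m M : 0 < a -> (0 < N)%N -> (m <= M <= N)%N ->
  0 <= Prob N a [set s | 1 - m%:R / N%:R <= ((occ s 0)%:R / N%:R : R)]
    <= (1 - expR (- (a * M%:R))) ^+ (M - m).
Proof.
move=> a0 N0 hm; rewrite /Prob S_eq //; last by lia.
have q1 : 0 <= (1 - expR (- (a * M%:R))) ^+ (M - m).
  rewrite exprn_ge0 // subr_ge0 -expR0 ler_expR oppr_le0 mulr_ge0 // ltW //.
have [Z0|Z0] := eqVneq (fine (Zpart N a)) 0.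
  by rewrite Z0 invr0 mulr0 lexx q1.
rewrite divr_ge0 ?fine_ge0 ?W_ge0 ?Z_ge0 //=.
exact: Wm_bound.
Qed.
End Bounds2.

Section Bounds3.
Context {R : realType}.

Lemma esumZ0 {T : choiceType} (S : set T) (c : R) (f : T -> \bar R) : 0 <= c ->
  (forall x, (0 <= f x)%E) ->
  (\esum_(i in S) (c%:E * f i) = c%:E * \esum_(i in S) f i)%E.
Proof.
rewrite le0r => /orP[/eqP->|c0] f0; last exact: esumZ.
by rewrite mul0e esum1 // => i _; rewrite mul0e.
Qed.

Lemma occ0_le s N : sumn s = N -> (occ s 0 <= N)%N.
Proof. by case: s => [|x t] /= <-; rewrite /occ //=; lia. Qed.

Lemma mean_bound N (a : R) m M : 0 < a -> (0 < N)%N -> (m <= M <= N)%N ->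
  0 <= (N%:R)^-1 * mean_n0 N a
    <= (1 - m%:R / N%:R) + (1 - expR (- (a * M%:R))) ^+ (M - m).
Proof.
move=> a0 N0 hm.
have q1 : 0 <= (1 - expR (- (a * M%:R))) ^+ (M - m).
  rewrite exprn_ge0 // subr_ge0 -expR0 ler_expR oppr_le0 mulr_ge0 // ltW //.
have l0 : 0 <= 1 - m%:R / N%:R :> R.
  have mN : (m <= N)%N by lia.
  by rewrite one_sub_div // divr_ge0 // ler0n.
rewrite /mean_n0.
have [Z0|Z0] := eqVneq (fine (Zpart N a)) 0.
  by rewrite Z0 invr0 !mulr0 lexx addr_ge0.
set Xn := esum _ _.
have Xn0 : (0 <= Xn)%E.
  by apply: esum_ge0 => x _; rewrite lee_fin mulr_ge0 // ltW // weight_gt0.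
have hX : (Xn <= ((N - m)%:R * fine (Zpart N a) + N%:R * fine (W N a m))%:E)%E.
  rewrite EFinD !EFinM (fineK (Zfin N a Z0)) (fineK (Wfin N a m Z0)).
  rewrite /W esum_mkcondr -!esumZ0; first last.
  - by move=> x; rewrite lee_fin ltW // weight_gt0.
  - by rewrite ler0n.
  - by move=> x; case: ifP => _ //; rewrite lee_fin ltW // weight_gt0.
  - by rewrite ler0n.
  rewrite -esumD; last 2 first.
  - by move=> x _; rewrite mule_ge0 // lee_fin ?ler0n // ltW // weight_gt0.
  - move=> x _; rewrite mule_ge0 // ?lee_fin ?ler0n //.
    by case: ifP => _ //; rewrite lee_fin ltW // weight_gt0.
  rewrite /Xn; apply: le_esum => s [cs ss].
  have -> : (if s \in Eset N m then (weight a s)%:E else 0%E)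
            = (if s \in Eset N m then weight a s else 0)%:E by case: ifP.
  rewrite -!EFinM -EFinD lee_fin.
  have w0 := weight_gt0 a s.
  have oN := occ0_le s N ss.
  case: ifPn => hE.
  - rewrite -mulrDl ler_pM2r // -natrD ler_nat; lia.
  - rewrite mulr0 addr0 ler_pM2r // ler_nat.
    move/negP: hE; rewrite in_setE /Eset /= => hE; lia.
have hf := fine_le_bound _ _ Xn0 hX.
have zpos := Zpos N a Z0.
have mN : (m <= N)%N by lia.
apply/andP; split.
  by rewrite mulr_ge0 ?invr_ge0 ?ler0n // divr_ge0 ?fine_ge0 ?Z_ge0.
apply: (le_trans (y := N%:R^-1 * (((N - m)%:R * fine (Zpart N a)
    + N%:R * fine (W N a m)) / fine (Zpart N a)))).
  by rewrite ler_wpM2l ?invr_ge0 ?ler0n // ler_wpM2r // invr_ge0 ltW.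
have -> : N%:R^-1 * (((N - m)%:R * fine (Zpart N a)
    + N%:R * fine (W N a m)) / fine (Zpart N a))
    = (N - m)%:R / N%:R + fine (W N a m) / fine (Zpart N a) :> R.
  have N0' : N%:R != 0 :> R by rewrite pnatr_eq0; lia.
  by field; apply/andP; split.
by rewrite one_sub_div // lerD2l Wm_bound.
Qed.
End Bounds3.

Section Asym.
Context {R : realType}.

Lemma pow_bound (x : R) n : 0 <= x <= 1 -> (1 - x) ^+ n <= (1 + n%:R * x)^-1.
Proof.
move=> /andP[x0 x1].
have p0 : 0 < 1 + n%:R * x by rewrite ltr_pwDl // mulr_ge0 // ler0n.
rewrite -div1r ler_pdivlMr //.
elim: n {p0} => [|n IH]; first by rewrite expr0 mul0r addr0 mul1r.
have e0 : 0 <= (1 - x) ^+ n by rewrite exprn_ge0 // subr_ge0.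
rewrite exprSr -mulrA; apply: (le_trans _ IH); apply: ler_wpM2l => //.
have n0 : (0:R) <= n%:R by rewrite ler0n.
rewrite -natr1; nra.
Qed.

Lemma Xlow (N m M : nat) (a lam A : R) :
  0 < a -> (0 < N)%N -> (m <= N)%N -> (m <= M)%N -> (N - m <= 2 * (M - m))%N ->
  (M * 2 <= N + m + 1)%N -> 0 < lam -> 0 < A ->
  lam / 2 <= 1 - m%:R / N%:R ->
  A / (lam / 4 * expR (-1)) <= ln (N%:R : R) - (1 - (1 - m%:R / N%:R) / 2) * N%:R * a ->
  A <= (M - m)%:R * expR (- (a * M%:R)).
Proof.
move=> a0 N0 mN mM hNM hM2 l0 A0 hl hh.
set n : R := N%:R; set mm : R := m%:R; set Mr : R := M%:R.
set h := ln n - _ in hh.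
have n0 : 0 < n by rewrite ltr0n.
have nn0 : n != 0 by rewrite gt_eqF.
have mMr : mm <= Mr by rewrite ler_nat.
have mn : mm <= n by rewrite ler_nat.
have eq1 : (1 - (1 - mm / n) / 2) * n = (n + mm) / 2 by field.
have hh' : h = ln n - (n + mm) / 2 * a by rewrite /h eq1.
have c0 : 0 < lam / 4 * expR (-1) by rewrite mulr_gt0 ?expR_gt0 // divr_gt0.
have h0 : 0 <= h.
  by apply: le_trans hh; rewrite ltW // divr_gt0.
have s1 : expR h * expR (- a / 2) / n <= expR (- (a * Mr)).
  rewrite -[X in _ / X](lnK (x := n)) ?posrE // -expRN -!expRD ler_expR hh'.
  have : (Mr * 2 <= n + mm + 1) by move: hM2; rewrite -(ler_nat R) natrM !natrD.
  move=> hM; nra.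
have s2 : (n - mm) / 2 <= (M - m)%:R.
  rewrite natrB // ler_pdivrMr // mulrC.
  have : ((N - m)%:R <= (2 * (M - m))%:R :> R) by rewrite ler_nat.
  by rewrite natrM !natrB.
have s3 : a < 2.
  have hl' := ln_sublinear n0.
  rewrite hh' in h0.
  have : (n + mm) / 2 * a < n by lra.
  move=> h1.
  have mm0 : 0 <= mm * a by rewrite mulr_ge0 ?ler0n // ltW.
  have h2 : n * a < n * 2 by lra.
  by rewrite ltr_pM2l in h2.
have s4 : expR (-1) <= expR (- a / 2) by rewrite ler_expR; lra.
have s5 : A / (lam / 4 * expR (-1)) <= expR h.
  by apply: (le_trans hh); have := expR_ge1Dx h; lra.
have lN : lam / 2 <= (n - mm) / n.
  by move: hl; rewrite /mm /n one_sub_div // natrB.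
apply: (le_trans (y := ((n - mm) / 2) * (expR h * expR (- a / 2) / n))); last first.
  apply: ler_pM => //.
  - by rewrite divr_ge0 // subr_ge0.
  - by rewrite divr_ge0 ?mulr_ge0 ?expR_ge0 // ltW.
have -> : (n - mm) / 2 * (expR h * expR (- a / 2) / n)
         = ((n - mm) / n) / 2 * expR h * expR (- a / 2) by field.
have -> : A = (lam / 2) / 2 * (A / (lam / 4 * expR (-1))) * expR (-1).
  have lam0 : lam != 0 by rewrite gt_eqF.
  have e0 : expR (-1) != 0 :> R by rewrite gt_eqF ?expR_gt0.
  by field; rewrite lam0 e0.
apply: ler_pM; rewrite ?expR_ge0 //.
- apply: mulr_ge0; apply: ltW; first by rewrite !divr_gt0.
  by rewrite divr_gt0.
apply: ler_pM.
- by apply: ltW; rewrite !divr_gt0.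
- by apply: ltW; rewrite divr_gt0.
- by rewrite ler_pM2r // invr_gt0.
- exact: s5.
Qed.
End Asym.

Section Main.
Context {R : realType}.

Lemma limn_esup_le (u : nat -> \bar R) (l : R) :
  (forall e, 0 < e -> \forall N \near \oo, (u N <= (l + e)%:E)%E) ->
  (limn_esup u <= l%:E)%E.
Proof.
move=> H; apply/lee_addgt0Pr => e e0.
rewrite /limn_esup limf_esupE -EFinD.
apply: le_trans; first apply: ereal_inf_lbound.
  by exists [set N | (u N <= (l + e)%:E)%E] => //; exact: H.
by apply: ge_ereal_sup => _ [N hN <-].
Qed.

Lemma inv_small (e X : R) : 0 < e -> e^-1 <= X -> (1 + X)^-1 < e.
Proof.
move=> e0 hX; have X0 : 0 < X by apply: lt_le_trans hX; rewrite invr_gt0.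
rewrite -[X in _ < X](invrK e) ltf_pV2 ?posrE ?invr_gt0 //; first lra.
by rewrite ltr_pwDr.
Qed.
End Main.

Theorem proposition2 (R : realType) (a : nat -> R) (ha : forall N, 0 < a N) :
  (forall (m : nat -> nat) (lam : R),
     (forall N, (m N <= N)%N) ->
     (fun N => 1 - (m N)%:R / N%:R) @ \oo --> lam ->
     0 < lam ->
     (fun N => ln (N%:R : R) - (1 - (1 - (m N)%:R / N%:R) / 2) * N%:R * a N)
       @ \oo --> +oo ->
     (fun N => Prob N (a N)
                 [set s | 1 - (m N)%:R / N%:R <= ((occ s 0)%:R / N%:R : R)])
       @ \oo --> (0 : R)
     /\ (limn_esup (fun N => ((N%:R)^-1 * mean_n0 N (a N))%:E) <= lam%:E)%E) /\
  ((fun N => ln (N%:R : R) - N%:R * a N) @ \oo --> +oo ->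
     (fun N => (N%:R)^-1 * mean_n0 N (a N)) @ \oo --> (0 : R)).
Proof.
have qb : forall N (M : nat), 0 <= expR (- (a N * M%:R)) <= 1.
  move=> N M; rewrite expR_ge0 /= -expR0 ler_expR oppr_le0 mulr_ge0 // ?ler0n //.
  exact: ltW.
split.
  move=> m lam hm hl lam0 hh.
  pose M N := ((N + m N + 1) %/ 2)%N.
  have hmM : forall N, (m N <= M N <= N)%N by move=> N; have := hm N; rewrite /M; lia.
  pose X N := ((M N - m N)%:R * expR (- (a N * (M N)%:R))).
  have HX : forall A, 0 < A -> \forall N \near \oo, A <= X N.
    move=> A A0.
    have ll : lam / 2 < lam by lra.
    have ev1 := cvgr_ge lam hl (lam / 2) ll.
    have ev2 := (proj1 (cvgryPge _) hh) (A / (lam / 4 * expR (-1))).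
    near=> N.
    apply: (Xlow N (m N) (M N) (a N) lam A) => //.
    - near: N; exact: nbhs_infty_gt.
    - by have := hmM N; lia.
    - by have := hm N; rewrite /M; lia.
    - by have := hm N; rewrite /M; lia.
    - by near: N; exact: ev1.
    - by near: N; exact: ev2.
  split.
  - apply/cvgrPdist_lt => e e0.
    near=> N.
    have N0 : (0 < N)%N by near: N; exact: nbhs_infty_gt.
    have hX : e^-1 <= X N by near: N; apply: HX; rewrite invr_gt0.
    have /andP[p0 p1] := prob_bound N (a N) (m N) (M N) (ha N) N0 (hmM N).
    rewrite sub0r normrN ger0_norm //.
    apply: (le_lt_trans p1); apply: (le_lt_trans (pow_bound _ _ (qb N (M N)))).
    exact: inv_small.
  - apply: limn_esup_le => e e0.
    have ll : lam < lam + e / 2 by lra.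
    have ev1 := cvgr_le lam hl (lam + e / 2) ll.
    near=> N.
    have N0 : (0 < N)%N by near: N; exact: nbhs_infty_gt.
    have hX : (e / 2)^-1 <= X N by near: N; apply: HX; rewrite invr_gt0 divr_gt0.
    have hlN : 1 - (m N)%:R / N%:R <= lam + e / 2 by near: N; exact: ev1.
    have /andP[_ h1] := mean_bound N (a N) (m N) (M N) (ha N) N0 (hmM N).
    rewrite lee_fin; apply: (le_trans h1).
    have := le_trans (pow_bound _ (M N - m N) (qb N (M N))) (ltW (inv_small _ _ _ hX)).
    rewrite divr_gt0 // => /(_ isT) h2.
    lra.
move=> hg; apply/cvgrPdist_lt => e e0.
pose k := (Num.Def.trunc (2 / e)).+1.
have hk : 2 / e < k%:R by exact: truncnS_gt.
have k0 : (0 < k)%N by [].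
have kr0 : 0 < k%:R :> R by rewrite ltr0n.
have ev := (proj1 (cvgryPge _) hg) (k%:R * (2 / e + 1)).
near=> N.
have N0 : (0 < N)%N by near: N; exact: nbhs_infty_gt.
have hgN : k%:R * (2 / e + 1) <= ln (N%:R : R) - N%:R * a N by near: N; exact: ev.
have dN : (N %/ k <= N)%N by exact: leq_div.
have hmM : (N - N %/ k <= N <= N)%N by rewrite leq_subr leqnn.
have /andP[p0 p1] := mean_bound N (a N) (N - N %/ k) N (ha N) N0 hmM.
rewrite sub0r normrN ger0_norm //; apply: (le_lt_trans p1).
rewrite one_sub_div // ?leq_subr // (_ : (N - (N - N %/ k) = N %/ k)%N); last by lia.
have Nr0 : 0 < N%:R :> R by rewrite ltr0n.
have t1 : (N %/ k)%:R / N%:R <= k%:R^-1 :> R.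
  rewrite ler_pdivrMr // mulrC ler_pdivlMr //.
  by rewrite -natrM ler_nat leq_trunc_div.
have t2 : k%:R^-1 < e / 2.
  rewrite -[X in _ < X]invrK ltf_pV2 ?posrE ?invr_gt0 ?divr_gt0 //.
  by rewrite invf_div.
set q := expR (- (a N * N%:R)).
have hq := qb N N.
have eq : N%:R * q = expR (ln (N%:R : R) - N%:R * a N).
  by rewrite expRD lnK ?posrE // /q (mulrC (a N)).
have t3 : (e / 2)^-1 <= (N %/ k)%:R * q.
  have c1 : (N%:R / k%:R - 1) <= (N %/ k)%:R :> R.
    rewrite lerBlDr ler_pdivrMr // natr1 -natrM ler_nat.
    by have := ltn_ceil N k0; rewrite mulSn addnC; lia.
  have c2 : 2 / e + 1 <= N%:R * q / k%:R.
    rewrite ler_pdivlMr // eq mulrC; apply: (le_trans hgN).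
    by have := expR_ge1Dx (ln (N%:R : R) - N%:R * a N); lra.
  rewrite invf_div.
  have : (N%:R / k%:R - 1) * q <= (N %/ k)%:R * q.
    by apply: ler_wpM2r => //; case/andP: hq.
  have -> : (N%:R / k%:R - 1) * q = N%:R * q / k%:R - q by field; rewrite gt_eqF.
  move=> h5; have hq1 : q <= 1 by case/andP: hq.
  lra.
have := le_lt_trans (pow_bound _ (N %/ k) hq) (inv_small _ _ _ t3).
rewrite divr_gt0 // => /(_ isT) t4.
lra.
Unshelve. all: by end_near.
Qed.
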